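(* Let $p\ge5$ be a prime with Legendre symbol $\left(\frac{-3}{p}\right)=-1$. Then for all integers $n,k\ge0$ with $p\nmid n$, $$b\!\left(3p^{2k+1}n+\frac{p^{2k+2}-1}{2}\right)\equiv 0\pmod 2.$$
   Context: The mock theta function $\mathcal{B}(q)=\sum_{n\ge0}\frac{q^n(-q;q^2)_n}{(q;q^2)_{n+1}}=\sum_{n\ge0}b(n)q^n$, where $(a;q)_n=\prod_{j=0}^{n-1}(1-aq^j)$. *)

(* Defs.v *)
From mathcomp Require Import all_boot all_algebra.
Set Implicit Arguments. Unset Strict Implicit. Unset Printing Implicit Defensive.
Import GRing.Theory Num.Theory.
Local Open Scope ring_scope.

(* Truncation of 1/(1 - q^m) modulo q^(N+1):  sum_{i=0}^{N} q^(m i). *)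
Definition geom_trunc (m N : nat) : {poly int} :=
  \sum_(i < N.+1) 'X^(m * i).

Definition negq_poch (n : nat) : {poly int} :=
  \prod_(j < n) (1 + 'X^(2 * j + 1)).

(* Truncation of 1/(q;q^2)_{n+1} = prod_{j<=n} 1/(1 - q^(2j+1)) modulo q^(N+1). *)
Definition inv_q_poch_trunc (n N : nat) : {poly int} :=
  \prod_(j < n.+1) geom_trunc (2 * j + 1) N.

(* b(N) = coefficient of q^N in
   B(q) = sum_{n>=0} q^n (-q;q^2)_n / (q;q^2)_{n+1}.
   Terms with n > N start at degree > N, and every truncation used is exact
   modulo q^(N+1), so this coefficient equals the true one. *)
Definition b (N : nat) : int :=
  (\sum_(n < N.+1) 'X^n * negq_poch n * inv_q_poch_trunc n N)`_N.

Definition legendre (a : int) (p : nat) : int :=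
  if (p%:Z %| a)%Z then 0
  else if [exists x : 'I_p, (p%:Z %| (x%:Z ^+ 2 - a))%Z] then 1 else -1.

(* Main.v *)
Require Import Defs.
From mathcomp Require Import all_boot all_algebra ring zify.
Import GRing.Theory Num.Theory.
Local Open Scope ring_scope.
Definition BP (R : nzRingType) (N : nat) : {poly R} :=
  \sum_(n < N.+1) 'X^n * (\prod_(j < n) (1 + 'X^(2 * j + 1)))
     * (\prod_(j < n.+1) \sum_(i < N.+1) 'X^((2 * j + 1) * i)).
Lemma mapb (R : nzRingType) N : ((b N)%:~R : R) = (BP R N)`_N.
Proof.
rewrite /b -(coef_map (intr : int -> R)); congr (polyseq _)`_N.
rewrite rmorph_sum; apply: eq_bigr => n _.
rewrite !rmorphM /= map_polyXn /negq_poch /inv_q_poch_trunc !rmorph_prod.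
congr (_ * _ * _); apply: eq_bigr => j _.
  by rewrite rmorphD rmorph1 /= map_polyXn.
rewrite /geom_trunc rmorph_sum; apply: eq_bigr => i _.
by rewrite /= map_polyXn.
Qed.
Lemma geom (R : comNzRingType) m N :
  (1 - 'X^m) * \sum_(i < N.+1) ('X^(m * i) : {poly R}) = 1 - 'X^(m * N.+1).
Proof.
elim: N => [|N IH]; first by rewrite big_ord1 muln0 expr0 mulr1 muln1.
rewrite big_ord_recr /= mulrDr IH (mulnS m N.+1) exprD.
ring.
Qed.
Lemma prodform (R : comNzRingType) N n : exists r : {poly R},
  \prod_(j < n) (1 - 'X^((2 * j + 1) * N.+1)) = 1 + 'X^(N.+1) * r.
Proof.
elim: n => [|n [r IH]]; first by exists 0; rewrite big_ord0 mulr0 addr0.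
rewrite big_ord_recr /= IH.
have -> : ((2 * n + 1) * N.+1 = N.+1 + 2 * n * N.+1)%N by rewrite mulnDl mul1n addnC.
rewrite exprD.
exists (r - 'X^(2 * n * N.+1) - r * 'X^(N.+1) * 'X^(2 * n * N.+1)).
ring.
Qed.
Lemma Z2neg (x : {poly 'Z_2}) : 1 + x = 1 - x.
Proof.
have h : x + x = 0.
  by rewrite -mulr2n -mulr_natr -polyC_natr (_ : (2%:R : 'Z_2) = 0) ?polyC0 ?mulr0 //; apply/val_inj.
rewrite -[RHS]addr0 -h; ring.
Qed.
Lemma term_coef N n : (n <= N)%N ->
 ('X^n * \prod_(j < n) (1 + 'X^(2 * j + 1))
   * \prod_(j < n.+1) \sum_(i < N.+1) 'X^((2 * j + 1) * i) : {poly 'Z_2})`_N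
 = (\sum_(i < N.+1) (N - n == (2 * n + 1) * i)%N : nat)%:R.
Proof.
move=> hn.
set G := fun j => \sum_(i < N.+1) ('X^((2 * j + 1) * i) : {poly 'Z_2}).
rewrite big_ord_recr /= -/(G n) -mulrA.
have -> : \prod_(j < n) (1 + 'X^(2 * j + 1)) * (\prod_(j < n) G j * G n)
   = G n * \prod_(j < n) (1 - 'X^((2 * j + 1) * N.+1)).
  rewrite mulrA mulrC -big_split /=; congr (_ * _); apply: eq_bigr => j _.
  by rewrite Z2neg geom.
have [r ->] := prodform 'Z_2 N n.
rewrite mulrDr mulr1 mulrDr coefD.
rewrite (_ : 'X^n * (G n * ('X^(N.+1) * r)) = 'X^(n + N.+1) * (G n * r)); last first.
  by rewrite exprD; ring.
rewrite [X in _ + X]coefXnM (ltn_addl _ (ltnSn N)) addr0 coefXnM ltnNge hn /=.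
rewrite coef_sum natr_sum; apply: eq_bigr => i _.
by rewrite coefXn.
Qed.
Lemma nonsq p k u a : prime p -> (0 < u)%N -> ~~ (p %| u)%N ->
  (a * a = p ^ (2 * k + 1) * u)%N -> False.
Proof.
move=> pp u0 pu e.
have a0 : (0 < a)%N.
  case: a e => // e; have: (0 < p ^ (2 * k + 1) * u)%N by rewrite muln_gt0 expn_gt0 prime_gt0.
  by rewrite -e.
have := congr1 (logn p) e.
have hq : (0 < p ^ (2 * k + 1))%N by rewrite expn_gt0 prime_gt0.
rewrite lognM // lognM // pfactorK // (lognE p u) (negbTE pu) !andbF addn0.
move/(congr1 odd); rewrite addnn odd_double oddD oddM /=.
by [].
Qed.
Lemma sym_even m (F : 'I_m -> 'I_m -> nat) :
  (forall i j, F i j = F j i) -> (forall i, F i i = 0%N) ->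
  ~~ odd (\sum_i \sum_j F i j).
Proof.
move=> Fs F0.
set A := (\sum_(i < m) \sum_(j < m) ((i < j) * F i j))%N.
have -> : (\sum_i \sum_j F i j = A + \sum_(i < m) \sum_(j < m) ((j < i) * F i j))%N.
  rewrite /A -big_split /=; apply: eq_bigr => i _; rewrite -big_split /=.
  apply: eq_bigr => j _.
  case: ltngtP => h; rewrite ?mul1n ?mul0n ?addn0 //.
  by rewrite (ord_inj h) F0.
rewrite exchange_big /= (_ : (\sum_(j < m) \sum_(i < m) ((j < i) * F i j) = A)%N).
  by rewrite addnn odd_double.
by apply: eq_bigr => i _; apply: eq_bigr => j _; rewrite Fs.
Qed.
Lemma Z2int (z : int) : (z%:~R : 'Z_2) = 0 -> (2 %| z)%Z.
Proof.
move=> h; apply/dvdz_mod0P.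
have e := divz_eq z 2.
have ge := modz_ge0 z (isT : (2 : int) != 0).
have lt := ltz_pmod z (isT : (0 : int) < 2).
move: ge lt h e; case: (z %% 2)%Z => // -[|[|k]] // _ _ h e.
move: h; rewrite e rmorphD rmorphM /= (_ : (2%:~R : 'Z_2) = 0); last by apply/val_inj.
by rewrite mulr0 add0r.
Qed.
Lemma symF N i j : (i < N.+1)%N -> (j < N.+1)%N ->
  (N - i == (2 * i + 1) * j)%N = (N - j == (2 * j + 1) * i)%N.
Proof.
move=> hi hj; apply/idP/idP => /eqP h; apply/eqP.
  have e : N = ((2 * i + 1) * j + i)%N by rewrite -h subnK // -ltnS.
  rewrite e (_ : ((2 * i + 1) * j + i = (2 * j + 1) * i + j)%N) ?addnK //; ring.
have e : N = ((2 * j + 1) * i + j)%N by rewrite -h subnK // -ltnS.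
rewrite e (_ : ((2 * j + 1) * i + j = (2 * i + 1) * j + i)%N) ?addnK //; ring.
Qed.
Lemma diagF N i : (i < N.+1)%N -> (N - i = (2 * i + 1) * i)%N ->
  (2 * N + 1 = (2 * i + 1) * (2 * i + 1))%N.
Proof.
move=> hi h; have e : N = ((2 * i + 1) * i + i)%N by rewrite -h subnK // -ltnS.
rewrite e; ring.
Qed.
Theorem theorem1p4 (p : nat) :
  prime p -> (5 <= p)%N -> legendre (-3) p = -1 ->
  forall n k : nat, ~~ (p %| n)%N ->
    (2 %| b (3 * p ^ (2 * k + 1) * n + (p ^ (2 * k + 2) - 1) %/ 2)%N)%Z.
Proof.
move=> pp p5 _ n k pn.
set q := (p ^ (2 * k + 1))%N.
have oddp : odd p.
  by case: (even_prime pp) => // e; move: p5; rewrite e.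
have eq2 : (p ^ (2 * k + 2) = q * p)%N.
  by rewrite (_ : (2 * k + 2) = (2 * k + 1).+1)%N ?expnSr //; lia.
rewrite eq2.
set N := (3 * q * n + (q * p - 1) %/ 2)%N.
have oqp : odd (q * p) by rewrite oddM /q oddX oddp orbT.
have hM : (2 * N + 1 = q * (6 * n + p))%N.
  have := divn_eq (q * p) 2.
  rewrite modn2 oqp => h.
  rewrite /N.
  have qp0 : (0 < q * p)%N by rewrite lt0n; apply/negP => /eqP e; rewrite e in oqp.
  nia.
have u0 : (0 < 6 * n + p)%N by rewrite addn_gt0 (prime_gt0 pp) orbT.
have pu : ~~ (p %| 6 * n + p)%N.
  rewrite dvdn_addl // Euclid_dvdM // negb_or pn andbT.
  apply/negP => h6; have h := dvdn_leq (isT : (0 < 6)%N) h6.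
  have [e|e] : p = 5%N \/ p = 6%N by lia.
    by rewrite e in h6.
  by rewrite e in pp.
apply: Z2int.
rewrite mapb /BP coef_sum.
rewrite (eq_bigr (fun i : 'I_N.+1 => ((\sum_(j < N.+1) (N - i == (2 * i + 1) * j)%N : nat)%:R))); last first.
  by move=> i _; rewrite term_coef // -ltnS.
rewrite -natr_sum.
pose F := fun i j : 'I_N.+1 => ((N - i == (2 * i + 1) * j)%N : nat).
have Fs : forall i j, F i j = F j i.
  move=> i j; have hi := ltn_ord i; have hj := ltn_ord j.
  by rewrite /F symF.
have F0 : forall i, F i i = 0%N.
  move=> i; have hi := ltn_ord i; rewrite /F.
  case: eqP => //= h; exfalso.
  apply: (@nonsq p k _ (2 * i + 1)%N pp u0 pu).
  by rewrite -/q -hM (diagF _ _ hi h).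
have := sym_even _ _ Fs F0; rewrite /F.
set c := (\sum_(i < N.+1) _)%N => hc.
rewrite -[c]odd_double_half (negbTE hc) add0n -muln2 natrM.
by rewrite (_ : (2%:R : 'Z_2) = 0) ?mulr0 //; apply/val_inj.
Qed.
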